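(* Let $n\ge2$, $A\in\mathbb{R}^{n\times n}$, $C\in\mathbb{R}^{1\times n}$, and suppose $(C,A)$ is observable, i.e. $\operatorname{rank}[C^T\ A^TC^T\ \cdots\ (A^{n-1})^TC^T]=n$. Let $S_0:=\mathcal{N}(C)$ and $S_k:=AS_{k-1}\cap S_0$ for $k\ge1$. Then the system $$\hat x^+ = A\big((\hat x+AS_{n-2})\cap(x+S_0)\big),$$ i.e. $\hat x^+\in g(\hat x,y):=A\big((\hat x+AS_{n-2})\cap\{\eta\in\mathbb{R}^n: C\eta=y\}\big)$ with $y=Cx$, is a deadbeat observer for $x^+=Ax$, $y=Cx$.
   Context: $AS:=\{As:s\in S\}$ and $\hat x+S:=\{\hat x+s:s\in S\}$. Solutions: $\phi(0,x)=x$, $\phi(k+1,x)=A\phi(k,x)$. Given $g:\mathbb{R}^n\times\mathbb{R}\rightrightarrows\mathbb{R}^n$, a solution of $\hat x^+\in g(\hat x,Cx)$ driven by $x^+=Ax$ is any sequence $\psi(k,\hat x,x)$ with $\psi(0,\hat x,x)=\hat x$, $\psi(k+1,\hat x,x)\in g(\psi(k,\hat x,x),C\phi(k,x))$. The system $\hat x^+\in g(\hat x,y)$ is a deadbeat observer if there is $p\ge1$ such that all such solutions satisfy $\psi(k,\hat x,x)=\phi(k,x)$ for all $x,\hat x\in\mathbb{R}^n$ and all $k\ge p$. *)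

(* Defs.v *)
From HB Require Import structures.
From mathcomp Require Import all_boot all_order all_algebra.
Set Implicit Arguments. Unset Strict Implicit. Unset Printing Implicit Defensive.
Import Order.TTheory GRing.Theory Num.Theory.
Local Open Scope ring_scope.

Section Defs.
Variables (R : realFieldType) (n : nat).

Definition obs_mx (A : 'M[R]_n) (C : 'rV[R]_n) : 'M[R]_n :=
  \matrix_(j < n, i < n) (((A ^+ i)^T *m C^T) j 0).

Definition observable (A : 'M[R]_n) (C : 'rV[R]_n) : Prop :=
  \rank (obs_mx A C) = n.

Definition img (A : 'M[R]_n) (S : 'cV[R]_n -> Prop) : 'cV[R]_n -> Prop :=
  fun v => exists s, S s /\ v = A *m s.
Definition translate (xh : 'cV[R]_n) (S : 'cV[R]_n -> Prop) : 'cV[R]_n -> Prop :=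
  fun v => exists s, S s /\ v = xh + s.

Fixpoint Sk (A : 'M[R]_n) (C : 'rV[R]_n) (k : nat) : 'cV[R]_n -> Prop :=
  match k with
  | O => fun s => C *m s = 0
  | k'.+1 => fun s => img A (Sk A C k') s /\ C *m s = 0
  end.

Definition phi (A : 'M[R]_n) (k : nat) (x : 'cV[R]_n) : 'cV[R]_n := A ^+ k *m x.

Definition is_solution (A : 'M[R]_n) (C : 'rV[R]_n)
  (g : 'cV[R]_n -> 'M[R]_1 -> 'cV[R]_n -> Prop)
  (xh x : 'cV[R]_n) (psi : nat -> 'cV[R]_n) : Prop :=
  psi 0%N = xh /\ forall k, g (psi k) (C *m phi A k x) (psi k.+1).

Definition deadbeat_observer (A : 'M[R]_n) (C : 'rV[R]_n)
  (g : 'cV[R]_n -> 'M[R]_1 -> 'cV[R]_n -> Prop) : Prop :=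
  exists p : nat, (1 <= p)%N /\
    forall (x xh : 'cV[R]_n) (psi : nat -> 'cV[R]_n),
      is_solution A C g xh x psi ->
      forall k, (p <= k)%N -> psi k = phi A k x.

(* g(xh, y) = A ((xh + A S_{n-2}) ∩ {eta | C eta = y}) ; g xh y v means v ∈ g(xh,y) *)
Definition g_obs (A : 'M[R]_n) (C : 'rV[R]_n) :
  'cV[R]_n -> 'M[R]_1 -> 'cV[R]_n -> Prop :=
  fun xh y => img A (fun eta => translate xh (img A (Sk A C (n - 2))) eta
                                /\ C *m eta = y).
End Defs.

(* Main.v *)
Require Import Defs.
From HB Require Import structures.
From mathcomp Require Import all_boot all_order all_algebra.
Set Implicit Arguments. Unset Strict Implicit. Unset Printing Implicit Defensive.
Import Order.TTheory GRing.Theory Num.Theory.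
Local Open Scope ring_scope.

Section Helpers.
Variables (R : realFieldType) (n : nat) (A : 'M[R]_n) (C : 'rV[R]_n).

Lemma Sk_add k : forall u v, Sk A C k u -> Sk A C k v -> Sk A C k (u + v).
Proof.
elim: k => [|k IH] u v /=.
  by move=> Hu Hv; rewrite mulmxDr Hu Hv addr0.
move=> [[u' [Hu' ->]] Cu] [[v' [Hv' ->]] Cv]; split.
  by exists (u' + v'); split; [apply: IH | rewrite mulmxDr].
by rewrite mulmxDr Cu Cv addr0.
Qed.

Lemma Sk_C k v : Sk A C k v -> C *m v = 0.
Proof. by case: k => [|k] //= [_ ->]. Qed.

Lemma Sk_step k v : Sk A C k.+1 v -> Sk A C k v.
Proof.
elim: k v => [|k IH] v /=; first by case.
move=> [[u [Hu ->]] Cv]; split => //.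
by exists u; split => //; apply: IH.
Qed.

Lemma Sk_mono i j v : (i <= j)%N -> Sk A C j v -> Sk A C i v.
Proof.
move=> /subnK <-; elim: (j - i)%N v => [|d IH] v //=.
by move=> H; apply: IH; apply: Sk_step; rewrite -addSn.
Qed.

Lemma Sk_char k v : Sk A C k v ->
  exists u, v = A ^+ k *m u /\ forall j, (j <= k)%N -> C *m (A ^+ j *m u) = 0.
Proof.
elim: k v => [|k IH] v /=.
  move=> Cv; exists v; split; first by rewrite expr0 mul1mx.
  by move=> j; rewrite leqn0 => /eqP ->; rewrite expr0 mul1mx.
move=> [[v' [Hv' ->]] Cv].
have [u [Hu Hj]] := IH _ Hv'.
exists u; split; first by rewrite Hu mulmxA exprS mulmxE.
move=> j; rewrite leq_eqVlt => /orP [/eqP ->|]; last by apply: Hj.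
by rewrite exprS -mulmxE -mulmxA -Hu.
Qed.

Lemma Sk_zero v : observable A C -> (1 <= n)%N -> Sk A C n.-1 v -> v = 0.
Proof.
move=> Hobs Hn /Sk_char [u [-> Hu]].
set M := (obs_mx A C)^T.
have HM : M \in unitmx.
  by rewrite -row_free_unit /row_free mxrank_tr Hobs.
have Mu : M *m u = 0.
  apply/matrixP => i j; rewrite !mxE (ord1 j).
  have Hi : (i <= n.-1)%N by rewrite -ltnS prednK.
  have := Hu i Hi.
  move=> Hc; rewrite -[RHS](_ : (C *m A^+i *m u) 0 0 = 0); last by rewrite -mulmxA Hc mxE.
  rewrite [RHS]mxE.
  apply: eq_bigr => k _; congr (_ * _).
  by rewrite /M /obs_mx !mxE; apply: eq_bigr => l _; rewrite !mxE mulrC.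
have -> : u = 0 by rewrite -(mulKmx HM u) Mu mulmx0.
by rewrite mulmx0.
Qed.
End Helpers.

Lemma alg1 (R : realFieldType) (n : nat) (p a b : 'cV[R]_n) : p + a + b - p = a + b.
Proof. by rewrite -addrA addrC addrA subrK addrC. Qed.

Lemma minn_lem (n k : nat) : (2 <= n)%N -> minn k.+1 (n - 1) = (minn k (n - 2)).+1.
Proof. by case: n => [|[|n']] // _; rewrite subn2 subn1 /= minnSS. Qed.

Theorem corollary1 (R : realFieldType) (n : nat) (hn : (2 <= n)%N)
  (A : 'M[R]_n) (C : 'rV[R]_n) :
  observable A C -> deadbeat_observer A C (g_obs A C).
Proof.
move=> Hobs; exists n; split; first by apply: leq_trans hn.
move=> x xh psi [H0 Hs].
have key : forall k, exists w, Sk A C (minn k (n-1)) w /\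
    psi k.+1 - phi A k.+1 x = A *m w.
  elim=> [|k [w [Hw He]]].
    have [eta [[[t [[s [Hs' ->]] ->]] Ceta] Hp]] := Hs 0%N.
    exists (psi 0%N + A *m s - x); rewrite min0n; split.
      by rewrite /= mulmxBr Ceta /phi expr0 mul1mx subrr.
    by rewrite Hp /phi expr1 mulmxBr.
  have [eta [[[t [[s [Hs' ->]] ->]] Ceta] Hp]] := Hs k.+1.
  have Ep : psi k.+1 = phi A k.+1 x + A *m w by rewrite -He addrC subrK.
  have Ee : psi k.+1 + A *m s - phi A k.+1 x = A *m w + A *m s.
    by rewrite Ep alg1.
  exists (A *m w + A *m s); split; last first.
    by rewrite Hp /phi exprS -mulmxE -mulmxA -mulmxBr /phi -/(phi A k.+1 x) Ee.
  have -> : minn k.+1 (n - 1) = (minn k (n - 2)).+1.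
    by apply: minn_lem.
  split; last by rewrite -Ee mulmxBr Ceta subrr.
  exists (w + s); split; last by rewrite mulmxDr.
  apply: Sk_add.
    apply: Sk_mono Hw; rewrite leq_min geq_minl /=.
    by apply: leq_trans (geq_minr _ _) _; apply: leq_sub2l.
  by apply: Sk_mono Hs'; rewrite geq_minr.
move=> [|k] Hk; first by move: (leq_trans hn Hk).
have [w [Hw He]] := key k.
have Hm : minn k (n - 1) = n.-1.
  by rewrite subn1; apply/minn_idPr; rewrite -ltnS prednK // (leq_trans _ hn).
rewrite Hm in Hw.
have w0 := Sk_zero Hobs (leq_trans (isT : (1 <= 2)%N) hn) Hw.
by apply/eqP; rewrite -subr_eq0 He w0 mulmx0.
Qed.
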